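(* Let $(M,g,\mu)$ be a weighted Riemannian manifold and $R\in(0,\infty]$. Assume $\mu$ satisfies $(D_R)$ and $(RD_R)$ with reverse doubling order $\nu>1$. Then for every $p\in(1,\nu/2)$ there is a constant $K_p<\infty$, depending only on $p$ and the doubling and reverse doubling constants, such that for all $o,x\in M$ and all $0<r<R$, $$r^2\left(\frac{1}{\mu(B(x,r))}\int_{B(x,r)}d(o,y)^{-2p}\,d\mu(y)\right)^{1/p}\le K_p.$$
   Context: $(D_R)$: there are $A,\eta>0$ with $\mu(B(x,r'))/\mu(B(x,r))\le A(r'/r)^\eta$ for all $x$ and $0<r\le r'\le 2R$ (for $R=\infty$: all $0<r\le r'$). $(RD_R)$ of order $\nu$: there is $a>0$ with $a(r'/r)^\nu\le\mu(B(x,r'))/\mu(B(x,r))$ for all $x$ and $0<r\le r'\le 2R$. Weighted manifold: $d\mu=\sigma^2dv_g$, $d$ the Riemannian distance. *)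

(* Defs.v *)
From HB Require Import structures.
From mathcomp Require Import all_boot all_order all_algebra.
From mathcomp Require Import all_classical all_reals all_analysis.
Set Implicit Arguments. Unset Strict Implicit. Unset Printing Implicit Defensive.
Import Order.TTheory GRing.Theory Num.Theory.
Local Open Scope ring_scope.
Local Open Scope classical_set_scope.

Definition is_metric {R : realType} {T : Type} (dist : T -> T -> R) : Prop :=
  [/\ forall x y, 0 <= dist x y,
      forall x y, dist x y = 0 <-> x = y,
      forall x y, dist x y = dist y x &
      forall x y z, dist x z <= dist x y + dist y z].

Definition mball {R : realType} {T : Type} (dist : T -> T -> R) (x : T) (r : R)
  : set T := [set y | dist x y < r].

Definition doubling_R {R : realType} {d} {T : measurableType d}
  (dist : T -> T -> R) (mu : {measure set T -> \bar R}) (Rad : \bar R)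
  (A eta : R) : Prop :=
  forall x r r', 0 < r -> r <= r' -> (r'%:E <= 2%:E * Rad)%E ->
    (mu (mball dist x r') <= (A * powR (r' / r) eta)%:E * mu (mball dist x r))%E.

Definition rev_doubling_R {R : realType} {d} {T : measurableType d}
  (dist : T -> T -> R) (mu : {measure set T -> \bar R}) (Rad : \bar R)
  (a nu : R) : Prop :=
  forall x r r', 0 < r -> r <= r' -> (r'%:E <= 2%:E * Rad)%E ->
    ((a * powR (r' / r) nu)%:E * mu (mball dist x r) <= mu (mball dist x r'))%E.

Definition inv_dist_pow {R : realType} {T : Type} (dist : T -> T -> R)
  (o : T) (p : R) (y : T) : \bar R :=
  if dist o y == 0 then +oo%E else (powR (dist o y) (- (2 * p)))%:E.

(* Main.v *)
Require Import Defs.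
From HB Require Import structures.
From mathcomp Require Import all_boot all_order all_algebra.
From mathcomp Require Import all_classical all_reals all_analysis.
From mathcomp Require Import measurable_realfun.
From mathcomp Require Import ring lra.
Import Order.TTheory GRing.Theory Num.Theory.
Local Open Scope ring_scope.
Local Open Scope classical_set_scope.

Lemma le_int_nm d (T : measurableType d) (R : realType)
  (mu : {measure set T -> \bar R}) (D : set T) (f g : T -> \bar R) :
  (forall x, D x -> (0 <= f x)%E) -> (forall x, D x -> (f x <= g x)%E) ->
  (\int[mu]_(x in D) f x <= \int[mu]_(x in D) g x)%E.
Proof.
move=> f0 fg.
have g0 : forall x, D x -> (0 <= g x)%E by move=> x Dx; exact: le_trans (f0 x Dx) (fg x Dx).
rewrite !ge0_integralE//; apply: ereal_sup_le => _ [h hf <-]; exists h => //= x.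
apply: le_trans (hf x) _; rewrite /patch; case: ifP => //; rewrite inE => Dx.
exact: fg.
Qed.

Lemma powRN_le (R : realType) (a b e : R) : 0 < a -> a <= b -> 0 <= e ->
  powR b (- e) <= powR a (- e).
Proof.
move=> a0 ab e0; have b0 : 0 < b by exact: lt_le_trans ab.
rewrite !powRN lef_pV2 ?posrE ?powR_gt0//.
by apply: ge0_ler_powR => //; rewrite nnegrE ltW.
Qed.

Lemma pt_bound (R : realType) (r p t : R) (u : nat -> \bar R) : 0 < r -> 0 < p -> 0 <= t ->
  (forall k, u k = ((powR (r / 2^+k.+2) (-(2 * p)) * ((t < r / 2^+k.+1)%R : bool)%:R)%R)%:E) ->
  ((if t == 0%R then +oo else (powR t (-(2 * p)))%:E) <=
  (powR (r/2) (-(2 * p)))%:E + \sum_(k <oo) u k)%E.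
Proof.
move=> r0 p0 t0 uE.
have p20 : 0 <= 2 * p by rewrite mulr_ge0// ltW.
have u0 : forall k, (0 <= u k)%E.
  by move=> k; rewrite uE lee_fin mulr_ge0// ?powR_ge0//; case: (_ < _).
have S0 : (0 <= \sum_(k <oo) u k)%E by apply: nneseries_ge0 => n _ _; exact: u0.
have c0 : 0 < powR (r/2^+2) (-(2 * p)) by rewrite powR_gt0// divr_gt0// exprn_gt0.
have ck : forall k, powR (r/2^+2) (-(2 * p)) <= powR (r / 2^+k.+2) (-(2 * p)).
  move=> k; apply: powRN_le => //; first by rewrite divr_gt0// exprn_gt0.
  rewrite ler_pM2l// lef_pV2 ?posrE ?exprn_gt0//.
  by rewrite ler_eXn2l ?ltr1n.
case: eqP => [tz|/eqP tn0].
  suff -> : (\sum_(k <oo) u k = +oo)%E by rewrite addey.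
  apply/eqyP => M M0.
  pose n := (Num.trunc (M / powR (r/2^+2) (-(2 * p)))).+1.
  apply: (le_trans _ (@nneseries_lim_ge _ u xpredT 0 n (fun n _ _ => u0 n))).
  apply: (@le_trans _ _ (\sum_(0 <= i < n) (powR (r/2^+2) (-(2 * p)))%:E)%E).
    rewrite sumEFin lee_fin sumr_const_nat subn0.
    have := truncnS_gt (M / (r / 2 ^+ 2) `^ (- (2 * p))).
    rewrite ltr_pdivrMr// => H; apply: ltW; apply: (lt_le_trans H).
    by rewrite -(mulr_natl ((r / 2 ^+ 2) `^ (- (2 * p))) n).
  apply: lee_sum => k _; rewrite uE lee_fin.
  by rewrite tz divr_gt0 ?exprn_gt0// mulr1 ck.
have tp : 0 < t by rewrite lt_neqAle eq_sym tn0.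
have [tr|tr] := leP (r/2) t.
  rewrite -[X in (X <= _)%E]adde0; apply: leeD => //.
  by rewrite lee_fin powRN_le// divr_gt0.
have exn : exists n, r / 2^+n.+1 <= t.
  exists (Num.trunc (r / t)); rewrite ler_pdivrMr ?exprn_gt0// -ler_pdivrMl//.
  apply: ltW; apply: lt_le_trans (truncnS_gt _) _; rewrite mulrC.
  by rewrite -natrX ler_nat ltnW// ltn_expl.
case: (ex_minnP exn) => N HN Hmin.
case: N HN Hmin => [|k] HN Hmin.
  by move: HN; rewrite expr1 leNgt tr.
have tk : t < r / 2^+k.+1.
  by rewrite ltNge; apply/negP => /Hmin; rewrite ltnn.
apply: le_trans (_ : (0 + \sum_(k <oo) u k <= _)%E); last first.
  by apply: leeD => //; rewrite lee_fin powR_ge0.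
rewrite add0e; apply: (le_trans _ (@nneseries_lim_ge _ u xpredT 0 k.+1 (fun n _ _ => u0 n))).
rewrite big_nat_recr//= -[X in (X <= _)%E]add0e; apply: leeD.
  by apply: sume_ge0 => i _; exact: u0.
rewrite uE tk mulr1 lee_fin; apply: powRN_le => //.
by rewrite divr_gt0 ?exprn_gt0.
Qed.

Lemma powRpE (R : realType) (a e : R) : 0 < a -> powR a e = expR (e * ln a).
Proof. by move=> a0; rewrite /powR gt_eqF. Qed.

Lemma ck_eq (R : realType) (r p : R) k : 0 < r ->
  powR (r / 2^+k.+2) (-(2 * p)) =
  powR r (-(2 * p)) * powR 2 (4 * p) * (powR 2 (2 * p))^+k.
Proof.
move=> r0.
rewrite !powRpE ?divr_gt0 ?exprn_gt0// -expRM_natl -!expRD.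
rewrite ln_div ?posrE ?exprn_gt0// lnXn//; congr expR.
ring.
Qed.


Lemma powRX (R : realType) (b e : R) k : 0 < b -> powR (b ^+ k) e = (powR b e) ^+ k.
Proof.
move=> b0; rewrite !powRpE ?exprn_gt0// lnXn// -expRM_natl; congr expR.
ring.
Qed.

Lemma powR2_lt (R : realType) (x y : R) : x < y -> powR 2 x < powR 2 y.
Proof.
move=> xy; have l2 : 0 < ln (2:R) by apply: ln_gt0; lra.
by rewrite !powRpE// ltr_expR ltr_pM2r.
Qed.

Lemma geom_bound (R : realType) (W q : R) n : 0 <= W -> 0 <= q -> q < 1 ->
  \sum_(0 <= i < n) W * q ^+ i <= W / (1 - q).
Proof.
move=> W0 q0 q1.
have H : (1 - q) * \sum_(0 <= i < n) q ^+ i = 1 - q ^+ n.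
  elim: n => [|n IH]; first by rewrite big_geq// expr0 subrr mulr0.
  rewrite big_nat_recr//= mulrDr IH exprS. ring.
have q1' : 0 < 1 - q by rewrite subr_gt0.
have qn : 0 <= q ^+ n by rewrite exprn_ge0.
have HS : \sum_(0 <= i < n) q ^+ i <= (1 - q)^-1.
  rewrite -(ler_pM2l q1') mulfV ?gt_eqF// H; lra.
by rewrite -mulr_sumr ler_wpM2l.
Qed.
Lemma radle (R : realType) (Rad : \bar R) (r z : R) : (0 < Rad)%E -> (r%:E < Rad)%E ->
  0 < r -> z <= 2 * r -> (z%:E <= 2%:E * Rad)%E.
Proof.
case: Rad => [R'||]//=; last first.
  by move=> _ _ _ _; rewrite mulry gtr0_sg// mul1e leey.
rewrite !lte_fin -EFinM lee_fin => ? ? ? ?; lra.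
Qed.

Arguments radle {R Rad r z}.

Lemma s_le (R : realType) (r : R) k : 0 < r -> r / 2 ^+ k.+1 <= r / 2.
Proof.
move=> r0; rewrite ler_pM2l// lef_pV2 ?posrE ?exprn_gt0//.
by rewrite exprS ler_peMr // exprn_ege1 // ler1n.
Qed.

Lemma mu_bound d (T : measurableType d) (R : realType) (dist : T -> T -> R)
  (mu : {measure set T -> \bar R}) (Rad : \bar R) (A eta a nu : R) (o x : T) (r : R) k :
  is_metric dist -> (forall x r, measurable (mball dist x r)) ->
  (forall x r, 0 < r -> (0 < mu (mball dist x r))%E /\ (mu (mball dist x r) < +oo)%E) ->
  (0 < Rad)%E -> doubling_R dist mu Rad A eta -> rev_doubling_R dist mu Rad a nu ->
  0 < A -> 0 < a -> 0 < r -> (r%:E < Rad)%E ->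
  (mu (mball dist o (r / 2^+k.+1) `&` mball dist x r) <=
   ((A * powR 2 eta / a) * fine (mu (mball dist x r)) * ((powR 2 nu)^-1)^+k)%:E)%E.
Proof.
move=> [d0 deq dsym dtri] mb mpos Rad0 Dbl RDbl A0 a0 r0 rR.
have s0 : 0 < r / 2 ^+ k.+1 by rewrite divr_gt0// exprn_gt0.
have sr := @s_le _ r k r0.
have [mB0 mBoo] := mpos x r r0.
set m := fine (mu (mball dist x r)).
have muB : mu (mball dist x r) = m%:E.
  by rewrite /m fineK// ge0_fin_numE// ltW.
have m0 : 0 < m by rewrite -lte_fin -muB.
have rhs0 : 0 <= A * powR 2 eta / a * m * ((powR 2 nu)^-1)^+k.
  by rewrite !mulr_ge0 ?exprn_ge0 ?invr_ge0 ?powR_ge0// ltW.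
have [[z [hz1 hz2]]|nz] := pselect (exists z, mball dist o (r / 2^+k.+1) z /\ mball dist x r z); last first.
  rewrite (_ : _ `&` _ = set0) ?measure0 ?lee_fin//.
  by apply/seteqP; split => // y [h1 h2]; apply: nz; exists y.
rewrite /mball /= in hz1 hz2.
have sub : mball dist o (r / 2) `<=` mball dist x (2 * r).
  move=> y; rewrite /mball /= => hy.
  have := dtri x z o; have := dtri x o y; rewrite (dsym z o); lra.
have [mk0 mkoo] := mpos o _ s0.
set b := fine (mu (mball dist o (r / 2^+k.+1))).
have muk : mu (mball dist o (r / 2^+k.+1)) = b%:E.
  by rewrite /b fineK// ge0_fin_numE// ltW.
have hr2 : r / 2 <= 2 * r by lra.
have hr3 : r <= 2 * r by lra.
have h1 := RDbl o _ _ s0 sr (radle Rad0 rR r0 hr2).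
have h2 := Dbl x r (2 * r) r0 hr3 (radle Rad0 rR r0 (lexx _)).
have h3 : (mu (mball dist o (r / 2)) <= mu (mball dist x (2 * r)))%E.
  by apply: le_measure => //; rewrite inE.
apply: (le_trans (measureIl _ (mb _ _) (mb _ _))).
apply: (@le_trans _ _ (b%:E)); first by rewrite -muk; exact: lexx.
rewrite lee_fin.
have e1 : r / 2 / (r / 2 ^+ k.+1) = 2 ^+ k.
  by rewrite exprS; field; rewrite gt_eqF ?exprn_gt0// gt_eqF.
have e2 : 2 * r / r = 2 by field; rewrite gt_eqF.
rewrite e1 powRX// muk in h1.
rewrite e2 muB in h2.
have := le_trans h1 (le_trans h3 h2).
rewrite -!EFinM lee_fin => H.
have Pk : 0 < 2 `^ nu ^+ k by rewrite exprn_gt0// powR_gt0.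
rewrite exprVn (_ : A * 2 `^ eta / a * m * (2 `^ nu ^+ k)^-1 =
   (A * 2 `^ eta * m) / (a * 2 `^ nu ^+ k)); last first.
  by field; rewrite !gt_eqF.
by rewrite ler_pdivlMr ?mulr_gt0// mulrC.
Qed.

Lemma half_eq (R : realType) (r p : R) : 0 < r ->
  powR (r / 2) (-(2 * p)) = powR r (-(2 * p)) * powR 2 (2 * p).
Proof.
move=> r0; rewrite !powRpE ?divr_gt0// -expRD ln_div ?posrE//; congr expR; ring.
Qed.

Theorem mainTheorem7 (R : realType) (A eta a nu p : R) :
  0 < A -> 0 < eta -> 0 < a -> 1 < nu -> 1 < p -> p < nu / 2 ->
  exists Kp : R,
  forall (d : measure_display) (T : measurableType d) (dist : T -> T -> R)
         (mu : {measure set T -> \bar R}) (Rad : \bar R),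
    is_metric dist ->
    (forall x r, measurable (mball dist x r)) ->
    (forall x r, 0 < r ->
        (0 < mu (mball dist x r))%E /\ (mu (mball dist x r) < +oo)%E) ->
    (0 < Rad)%E ->
    doubling_R dist mu Rad A eta ->
    rev_doubling_R dist mu Rad a nu ->
    forall (o x : T) (r : R), 0 < r -> (r%:E < Rad)%E ->
      ((r ^+ 2)%:E *
         poweR ((fine (mu (mball dist x r)))^-1%:E *
                  \int[mu]_(y in mball dist x r) inv_dist_pow dist o p y)
               p^-1
       <= Kp%:E)%E.
Proof.
move=> A0 eta0 a0 nu1 p1 pnu.
have p0 : 0 < p by lra.
pose q := 2 `^ (2 * p) / 2 `^ nu.
have q0 : 0 <= q by rewrite divr_ge0// powR_ge0.
have q1 : q < 1.
  by rewrite ltr_pdivrMr ?powR_gt0// mul1r; apply: powR2_lt; lra.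
pose K := A * 2 `^ eta / a.
have K0 : 0 <= K by rewrite divr_ge0 ?mulr_ge0 ?powR_ge0// ltW.
pose W := 2 `^ (4 * p) * K.
have W0 : 0 <= W by rewrite mulr_ge0// powR_ge0.
pose C := 2 `^ (2 * p) + W / (1 - q).
have C0 : 0 <= C by rewrite addr_ge0 ?powR_ge0// divr_ge0// subr_ge0 ltW.
exists (C `^ p^-1).
move=> d T dist mu Rad met mb mpos Rad0 Dbl RDbl o x r r0 rR.
have met' := met; case: met' => [d0 deq dsym dtri].
have [mB0 mBoo] := mpos x r r0.
set m := fine (mu (mball dist x r)).
have muB : mu (mball dist x r) = m%:E.
  by rewrite /m fineK// ge0_fin_numE// ltW.
have m0 : 0 < m by rewrite -lte_fin -muB.
pose c k := powR (r / 2^+k.+2) (-(2 * p)).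
have c0 : forall k, 0 <= c k by move=> k; exact: powR_ge0.
pose h : nat -> T -> \bar R := fun (k : nat) (y : T) => ((c k * \1_(mball dist o (r / 2^+k.+1)) y)%R)%:E.
have h0 : forall k y, (0 <= h k y)%E.
  by move=> k y; rewrite /h lee_fin mulr_ge0// indicE; case: (_ \in _).
have mh : forall k, measurable_fun (mball dist x r) (h k).
  move=> k; rewrite /h; apply/measurable_EFinP; apply: measurable_funM.
    exact: measurable_cst.
  exact: measurable_indic.
pose f := fun y => (((r/2) `^ (-(2 * p)))%:E + \sum_(k <oo) h k y)%E.
set I := (\int[mu]_(y in mball dist x r) inv_dist_pow dist o p y)%E.
have HInt : (I <= (C * r `^ (-(2 * p)) * m)%:E)%E.
  apply: (@le_trans _ _ (\int[mu]_(y in mball dist x r) f y)%E).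
    apply: le_int_nm.
      by move=> y _; rewrite /inv_dist_pow; case: ifP => _; rewrite ?le0y ?lee_fin ?powR_ge0.
    move=> y _; rewrite /inv_dist_pow /f; apply: pt_bound => // k.
    rewrite /h indicE.
    have -> : (y \in mball dist o (r / 2 ^+ k.+1)) = (dist o y < r / 2 ^+ k.+1).
      by apply/idP/idP => [/set_mem|H] //; exact: mem_set.
    by [].
  rewrite /f ge0_integralD//; last 3 first.
  - by move=> y _; rewrite lee_fin powR_ge0.
  - by move=> y _; apply: nneseries_ge0 => n _ _; exact: h0.
  - exact: (@ge0_emeasurable_sum _ _ _ _ h predT (fun k y _ _ => h0 k y) (fun k _ => mh k)).
  rewrite integral_cst// muB integral_nneseries//.
  pose V := W * r `^ (-(2 * p)) * m.
  have term : forall k, (\int[mu]_(y in mball dist x r) h k y <= (V * q ^+ k)%:E)%E.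
    move=> k; rewrite /h.
    under eq_integral do rewrite EFinM.
    rewrite ge0_integralZl_EFin//; last by apply/measurable_EFinP; exact: measurable_indic.
    rewrite integral_indic//.
    apply: le_trans (lee_wpmul2l _ (@mu_bound _ _ _ dist mu Rad A eta a nu o x r k met mb mpos Rad0 Dbl RDbl A0 a0 r0 rR)) _.
      by rewrite lee_fin.
    rewrite -EFinM lee_fin -/m /c ck_eq// /V /W /K /q exprMn exprVn le_eqVlt; apply/orP; left.
    apply/eqP; ring.
  have Hs : (\sum_(k <oo) \int[mu]_(y in mball dist x r) h k y <= (V / (1 - q))%:E)%E.
    apply: lime_le.
      by apply: is_cvg_nneseries => n _ _; apply: integral_ge0 => y _; exact: h0.
    apply: nearW => n.
    apply: (@le_trans _ _ (\sum_(0 <= k < n) (V * q ^+ k)%:E)%E).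
      by apply: lee_sum => k _; exact: term.
    rewrite sumEFin lee_fin; apply: geom_bound => //.
    by apply: mulr_ge0; [apply: mulr_ge0; [exact: W0| exact: powR_ge0] | exact: ltW].
  apply: le_trans (leeD (lexx _) Hs) _.
  rewrite -EFinM -EFinD lee_fin half_eq// /C /V le_eqVlt; apply/orP; left.
  apply/eqP; field; rewrite subr_eq0 gt_eqF//.
have I0 : (0 <= I)%E.
  apply: integral_ge0 => y _; rewrite /inv_dist_pow.
  by case: ifP => _; rewrite ?le0y ?lee_fin ?powR_ge0.
have H2 : ((m^-1)%:E * I <= (C * r `^ (-(2 * p)))%:E)%E.
  apply: le_trans (lee_wpmul2l _ HInt) _; first by rewrite lee_fin invr_ge0 ltW.
  rewrite -EFinM lee_fin le_eqVlt; apply/orP; left; apply/eqP.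
  by field; rewrite gt_eqF.
have H3 : (((m^-1)%:E * I) `^ p^-1 <= (C * r `^ (-(2 * p)))%:E `^ p^-1)%E.
  apply: gt0_ler_poweR => //.
  - by rewrite invr_ge0 ltW.
  - by rewrite in_itv /= leey andbT mule_ge0// lee_fin invr_ge0 ltW.
  - by rewrite in_itv /= leey andbT lee_fin mulr_ge0// powR_ge0.
rewrite poweR_EFin in H3.
apply: le_trans (lee_wpmul2l _ H3) _; first by rewrite lee_fin exprn_ge0// ltW.
rewrite -EFinM lee_fin powRM ?powR_ge0// -powRrM.
have -> : -(2 * p) * p^-1 = -2 by field; rewrite gt_eqF.
rewrite powRN powR_mulrn ?(ltW r0)// le_eqVlt; apply/orP; left; apply/eqP.
by field; rewrite gt_eqF.
Qed.
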